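(* Let $B \subset \mathbb{Z}$ be a Bohr-zero non-periodic set. Then the set $D := \{xy - z^2 \,:\, x,y,z \in B\}$ satisfies $D = \mathbb{Z}$.
   Context: $\mathbb{T}^n=\mathbb{R}^n/\mathbb{Z}^n$. A set $B\subset \mathbb{Z}$ is a non-periodic Bohr set if there exist $n\ge 1$, a homomorphism $\tau:\mathbb{Z}\to\mathbb{T}^n$ with $\overline{\tau(\mathbb{Z})}=\mathbb{T}^n$, and an open set $U\subset\mathbb{T}^n$ with $B=\tau^{-1}(U)$; it is Bohr-zero if moreover $U$ contains the zero element of $\mathbb{T}^n$. *)

(* Defs.v *)
(* The torus T^n = R^n / Z^n is modelled through
   its universal cover: a point of T^n is represented by a row vector of
   'rV[R]_n (R = Stdlib's reals, a realType), two vectors representing the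
   same point iff their difference lies in Z^n. *)
From HB Require Import structures.
From mathcomp Require Import all_boot all_order all_algebra.
From mathcomp Require Import all_classical all_reals all_analysis.
From mathcomp Require Import Rstruct Rstruct_topology.
Set Implicit Arguments. Unset Strict Implicit. Unset Printing Implicit Defensive.
Import Order.TTheory GRing.Theory Num.Theory.
Local Open Scope ring_scope.
Local Open Scope classical_set_scope.

Notation RR := Rdefinitions.R.

Definition lattice_vec (n : nat) (v : 'rV[RR]_n) : Prop :=
  forall i : 'I_n, v ord0 i \is a Num.int.

Definition torus_eq (n : nat) (u v : 'rV[RR]_n) : Prop := lattice_vec (u - v).

(* A subset of T^n, seen as a Z^n-invariant subset of R^n *)
Definition Zn_invariant (n : nat) (U : set 'rV[RR]_n) : Prop :=
  forall u v, torus_eq u v -> U u -> U v.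

(* An open set of T^n = an open Z^n-invariant subset of R^n (quotient topology) *)
Definition torus_open (n : nat) (U : set 'rV[RR]_n) : Prop :=
  Zn_invariant U /\ open U.

Definition torus_hom (n : nat) (tau : int -> 'rV[RR]_n) : Prop :=
  forall a b : int, torus_eq (tau (a + b)%R) (tau a + tau b).

(* the image of tau is dense in T^n: its full preimage tau(Z) + Z^n in R^n is dense *)
Definition torus_dense_image (n : nat) (tau : int -> 'rV[RR]_n) : Prop :=
  closure [set tau k + w | k in [set: int] & w in lattice_vec (n:=n)] = setT.

Definition bohr_zero_nonperiodic (B : set int) : Prop :=
  exists (n : nat) (tau : int -> 'rV[RR]_n) (U : set 'rV[RR]_n),
    (1 <= n)%N /\ torus_hom tau /\ torus_dense_image tau /\
    torus_open U /\ U 0 /\ B = [set k | U (tau k)].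

(* Main.v *)
Require Import Defs.
From HB Require Import structures.
From mathcomp Require Import all_boot all_order all_algebra.
From mathcomp Require Import all_classical all_reals all_analysis.
From mathcomp Require Import Rstruct Rstruct_topology.
From mathcomp Require Import ring lra zify.
Import Order.TTheory GRing.Theory Num.Theory.
Set Implicit Arguments. Unset Strict Implicit. Unset Printing Implicit Defensive.
Local Open Scope ring_scope.
Local Open Scope classical_set_scope.


Definition nearz (n : nat) (x : 'I_n -> RR) (r : RR) : Prop :=
  exists N : 'I_n -> int, forall i, `|x i - (N i)%:~R| <= r.

Lemma nearz_le n (x : 'I_n -> RR) r s : nearz x r -> r <= s -> nearz x s.
Proof. move=> [N HN] rs; exists N => i; exact: le_trans (HN i) rs. Qed.

Lemma nearz_ext n (x y : 'I_n -> RR) r : (forall i, x i = y i) -> nearz x r -> nearz y r.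
Proof. move=> e [N HN]; exists N => i; by rewrite -e. Qed.

Lemma nearz_add n (x y : 'I_n -> RR) r s :
  nearz x r -> nearz y s -> nearz (fun i => x i + y i) (r + s).
Proof.
move=> [N HN] [M HM]; exists (fun i => N i + M i) => i.
rewrite intrD.
have -> : x i + y i - ((N i)%:~R + (M i)%:~R) = (x i - (N i)%:~R) + (y i - (M i)%:~R) by ring.
apply: le_trans (ler_normD _ _) _; exact: lerD.
Qed.

Lemma nearz_small n (x : 'I_n -> RR) r : (forall i, `|x i| <= r) -> nearz x r.
Proof. move=> H; exists (fun=> 0) => i; by rewrite subr0. Qed.

Lemma nearz_shift n (x : 'I_n -> RR) (N : 'I_n -> int) r :
  nearz (fun i => x i + (N i)%:~R) r -> nearz x r.
Proof.
move=> [M HM]; exists (fun i => M i - N i) => i.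
rewrite intrB. have := HM i.
have -> : x i + (N i)%:~R - (M i)%:~R = x i - ((M i)%:~R - (N i)%:~R) by ring.
done.
Qed.

Lemma nearz_mulz n (x : 'I_n -> RR) r (k : int) :
  nearz x r -> nearz (fun i => k%:~R * x i) (`|k|%:~R * r).
Proof.
move=> [N HN]; exists (fun i => k * N i) => i.
rewrite intrM -mulrBr normrM. rewrite -intr_norm.
by apply: ler_wpM2l.
Qed.

Lemma nearz_mulr n (x : 'I_n -> RR) r (k : RR) (m : int) :
  k = m%:~R -> nearz x r -> nearz (fun i => k * x i) (`|k| * r).
Proof. move=> -> H; rewrite -intr_norm; exact: nearz_mulz. Qed.

Lemma nearz0 n (x : 'I_n -> RR) (N : 'I_n -> int) : (forall i, x i = (N i)%:~R) -> nearz x 0.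
Proof. move=> H; exists N => i; by rewrite H subrr normr0. Qed.

Definition frc (x : RR) : RR := x - (Num.floor x)%:~R.

Lemma frc_ge0 x : 0 <= frc x.
Proof. rewrite /frc subr_ge0; exact: floor_le. Qed.
Lemma frc_lt1 x : frc x < 1.
Proof. rewrite /frc ltrBlDr addrC -[1]/(1%:~R) -intrD; exact: floorD1_gt. Qed.

Definition bx (L : nat) (x : RR) : 'I_L.+1 :=
  inord `|Num.floor (L.+1%:R * frc x)|%N.

Lemma bx_close L x y : bx L x = bx L y -> `|frc x - frc y| <= L.+1%:R^-1.
Proof.
have key : forall z : RR, let F := Num.floor (L.+1%:R * frc z) in
  (0 <= F) /\ (`|F|%N < L.+1)%N /\ F%:~R <= L.+1%:R * frc z < (F + 1)%:~R.
  move=> z F; have h0 : 0 <= L.+1%:R * frc z by rewrite mulr_ge0 // frc_ge0.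
  have F0 : 0 <= F by rewrite floor_ge0.
  split => //; split; last exact: floor_itv.
  have : F < L.+1%:Z.
    rewrite floor_lt_int. rewrite -[X in _ < X]mulr1 -[(L.+1)%:~R]/(L.+1%:R).
    by rewrite ltr_pM2l ?ltr0n // frc_lt1.
  rewrite -(gez0_abs F0). by [].
move=> e. have [x0 [xL /andP[x1 x2]]] := key x. have [y0 [yL /andP[y1 y2]]] := key y.
move: e; rewrite /bx => /(congr1 (@nat_of_ord _)); rewrite !inordK // => /eqP.
move=> /eqP e0; have e := congr1 Posz e0; move: e; rewrite !gez0_abs // => e.
move: x1 x2; rewrite e => x1 x2.
set F := Num.floor _ in x1 x2 y1 y2 e.
rewrite intrD in x2 y2.
have Lp : 0 < L.+1%:R :> RR by rewrite ltr0n.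
have h : `|L.+1%:R * frc x - L.+1%:R * frc y| <= 1.
  rewrite ler_norml; apply/andP; split; lra.
rewrite -mulrBr normrM gtr0_norm // in h.
rewrite -(ler_pM2l Lp) mulrV ?unitfE ?gt_eqF //.
Qed.

Lemma pigeon n (L : nat) (p : nat -> 'I_n -> RR) :
  exists k1 k2 : nat, (k1 < k2 <= L.+1 ^ n)%N /\
    nearz (fun i => p k2 i - p k1 i) (L.+1%:R^-1).
Proof.
pose K := (L.+1 ^ n)%N.
pose f (k : 'I_K.+1) : {ffun 'I_n -> 'I_L.+1} := [ffun i => bx L (p k i)].
have ninj : ~ injective f.
  move=> /leq_card; rewrite card_ffun !card_ord /K. by rewrite ltnn.
have [x [y [fxy xy]]] : exists x y, f x = f y /\ x != y.
  apply: contrapT => H; apply: ninj => x y fxy.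
  apply/eqP/negPn/negP => nxy; apply: H; by exists x, y.
have main : forall a b : 'I_K.+1, f a = f b -> nearz (fun i => p b i - p a i) (L.+1%:R^-1).
  move=> a b fab; exists (fun i => Num.floor (p b i) - Num.floor (p a i)) => i.
  have := congr1 (fun g : {ffun _ -> _} => g i) fab; rewrite !ffunE => /bx_close h.
  rewrite distrC in h. apply: le_trans h. rewrite /frc intrB.
  by rewrite le_eqVlt; apply/orP; left; apply/eqP; congr `|_|; ring.
case: (ltngtP x y) => [lt|gt|eq]; last by move: xy; rewrite (val_inj eq) eqxx.
- exists x, y; split; last exact: main.
  by rewrite lt -ltnS ltn_ord.
- exists y, x; split; last exact: main.
  by rewrite gt -ltnS ltn_ord.
Qed.

Lemma nat_gt (x : RR) : exists N : nat, x < N%:R.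
Proof.
exists (Num.trunc `|x|).+1.
have := @truncn_lt_nat _ `|x| (Num.trunc `|x|).+1 (normr_ge0 _).
rewrite ltnSn => /esym h. apply: le_lt_trans h. exact: ler_norm.
Qed.

Lemma small_inv (eta : RR) : 0 < eta -> exists L : nat, L.+1%:R^-1 <= eta.
Proof.
move=> e0; have [N HN] := nat_gt eta^-1; exists N.
have h1 : 0 < N.+1%:R :> RR by rewrite ltr0n.
rewrite -(ler_pM2l h1) mulrV ?unitfE ?gt_eqF //.
have : eta^-1 < N.+1%:R by apply: lt_le_trans HN _; rewrite ler_nat.
rewrite -(ltr_pM2r e0) mulVf ?gt_eqF //. by move/ltW.
Qed.

Lemma dirichlet n (al : 'I_n -> RR) (X eta : RR) : 0 < eta ->
  exists M : int, X <= `|M|%:~R /\ nearz (fun i => M%:~R * al i) eta.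
Proof.
move=> e0; have [L HL] := small_inv e0.
have [Q HQ] := nat_gt `|X|.
pose p k := fun i => (k * Q.+1)%:R * al i.
have [k1 [k2 [/andP[k12 _] hn]]] := pigeon L p.
exists ((k2 - k1) * Q.+1)%:Z; split.
  rewrite ger0_norm //.
  apply: le_trans (ler_norm X) _. apply: (le_trans (ltW HQ)).
  rewrite -[X in _ <= X]/(((k2 - k1) * Q.+1)%:R) ler_nat.
  nia.
apply: nearz_le _ HL; apply: nearz_ext hn => i.
rewrite /p -[(Posz _)%:~R]/(_%:R) mulnBl natrB; last by rewrite leq_mul2r ltnW // orbT.
ring.
Qed.

Definition kron n (al : 'I_n -> RR) := forall (p : 'I_n -> RR) (r : RR), 0 < r ->
  exists k : int, nearz (fun i => k%:~R * al i - p i) r.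

Definition stepP n (al : 'I_n -> RR) (g : int -> 'I_n -> RR) (rho S : RR) (Mb : int * int) :=
  [/\ S / rho <= `|Mb.1|%:~R, nearz (fun i => Mb.1%:~R * al i) (rho / (2 * S)) &
       nearz (fun i => Mb.2%:~R * al i - g Mb.1 i / (2 * Mb.1%:~R)) (rho / (2 * (S + `|Mb.1|%:~R)))].

Lemma two_gt0 : (0 : RR) < 2. Proof. lra. Qed.

Lemma step n (al : 'I_n -> RR) (g : int -> 'I_n -> RR) (rho S : RR) : kron al -> 0 < rho ->
  exists Mb : int * int, 1 <= S -> stepP al g rho S Mb.
Proof.
move=> K r0; case: (boolP (1 <= S)) => S1; last by exists (0, 0).
have S0 : 0 < S by apply: lt_le_trans S1.
have [M [HM1 HM2]] := dirichlet al (S / rho) (divr_gt0 r0 (mulr_gt0 two_gt0 S0)).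
have Mn : 0 <= `|M|%:~R :> RR by rewrite ler0z normr_ge0.
have [b Hb] := K (fun i => g M i / (2 * M%:~R)) (rho / (2 * (S + `|M|%:~R)))
  (divr_gt0 r0 (mulr_gt0 two_gt0 (lt_le_trans S0 (ler_wpDr Mn (lexx S))))).
by exists (M, b) => _; split.
Qed.

Fixpoint Sq (f : RR -> int * int) (s0 : RR) (k : nat) : RR :=
  match k with
  | 0%N => s0
  | k'.+1 => Sq f s0 k' + `|(f (Sq f s0 k')).1|%:~R + `|(f (Sq f s0 k')).2|%:~R
  end.

Lemma Sq_mono f s0 k d : Sq f s0 k <= Sq f s0 (k + d).
Proof.
elim: d => [|d IH]; first by rewrite addn0.
rewrite addnS /=. apply: le_trans IH _.
rewrite -addrA lerDl addr_ge0 // ler0z normr_ge0.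
Qed.

Lemma Sq_ge f s0 k : s0 <= Sq f s0 k.
Proof. by have := Sq_mono f s0 0 k; rewrite add0n. Qed.
Lemma num_facts (rho S m : RR) : 0 < rho -> 1 <= S -> S / rho <= m ->
  [/\ 0 < m, S <= rho * m, rho / (2 * (S + m)) <= rho / 2 &
      forall x, 0 <= x -> x <= S -> 2 * x * (rho / (2 * (S + m))) <= rho] /\
  [/\ forall x, 0 <= x -> x <= S -> x / m <= rho,
     rho / (2 * S) <= rho / 2 & forall x, 0 <= x -> x <= S -> 2 * x * (rho / (2 * S)) <= rho].
Proof.
move=> r0 S1 Sm.
have S0 : 0 < S by lra.
have e : rho * (S / rho) = S by field; lra.
have SR : S <= rho * m by nra.
have m0 : 0 < m by nra.
have Sm0 : 0 < S + m by lra.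
have q1 : rho / (2 * (S + m)) * (2 * (S + m)) = rho by field; lra.
have q0 : 0 <= rho / (2 * (S + m)) by apply: divr_ge0; lra.
have p1 : rho / (2 * S) * (2 * S) = rho by field; lra.
have p0 : 0 <= rho / (2 * S) by apply: divr_ge0; lra.
split; split => //.
- nra.
- move=> x x0 xS; nra.
- move=> x x0 xS; rewrite ler_pdivrMr //; nra.
- nra.
- move=> x x0 xS; nra.
Qed.

Lemma invariant n (al : 'I_n -> RR) (g : int -> 'I_n -> RR) (rho : RR) f (a : int) (k1 : nat) :
  0 < rho -> (forall S, 1 <= S -> stepP al g rho S (f S)) -> (forall M i, `|g M i| <= 1) ->
  let s0 := `|a|%:~R + 1 in
  let b j := (f (Sq f s0 j)).2 in
  let ms k := a + \sum_(k1 <= j < k) b j in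
  forall d, let k := (k1 + d)%N in
  [/\ `|ms k|%:~R <= Sq f s0 k,
     nearz (fun i => (ms k)%:~R * al i - a%:~R * al i) (2 * rho * d%:R) &
     nearz (fun i => (ms k)%:~R ^+ 2 * al i - a%:~R ^+ 2 * al i
                     - \sum_(k1 <= j < k) (b j)%:~R ^+ 2 * al i) (2 * rho * d%:R)].
Proof.
move=> r0 Hf Hg s0 b ms d; elim: d => [|d IH] k.
- rewrite /k addn0 /ms big_geq // addr0 mulr0; split.
  + apply: le_trans (Sq_ge _ _ _). rewrite /s0 lerDl //.
  + apply: nearz_small => i; by rewrite subrr normr0.
  + apply: nearz_small => i; by rewrite big_geq // subrr subr0 normr0.
move: IH; rewrite /k addnS; set k0 := (k1 + d)%N => -[I1 I2 I3].
set S := Sq f s0 k0.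
have S1 : 1 <= S by apply: le_trans (Sq_ge _ _ _); rewrite /s0 lerDr ler0z normr_ge0.
have [P1 P2 P3] := Hf S S1.
set M := (f S).1 in P1 P2 P3.
have bk : b k0 = (f S).2 by [].
rewrite -bk in P3.
have [[m0 SR N2 N3] [N4 N5 N6]] := num_facts r0 S1 P1.
have msS : ms k0.+1 = ms k0 + b k0 by rewrite /ms big_nat_recr ?leq_addr //= addrA.
have sqS : forall i, \sum_(k1 <= j < k0.+1) (b j)%:~R ^+ 2 * al i =
   \sum_(k1 <= j < k0) (b j)%:~R ^+ 2 * al i + (b k0)%:~R ^+ 2 * al i.
  by move=> i; rewrite big_nat_recr ?leq_addr.
have nms : 0 <= `|ms k0|%:~R :> RR by rewrite ler0z normr_ge0.
have gM : forall i, `|g M i / (2 * M%:~R)| <= rho / 2.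
  move=> i; rewrite normrM normfV normrM (@gtr0_norm _ 2) ?two_gt0 // -intr_norm.
  have := Hg M i; have := N5; move: m0; set mm := `|M|%:~R => m0 h1 h2.
  have h3 : 0 <= `|g M i| by [].
  have h4 := N4 1 ler01 S1. rewrite -/mm in h4.
  have q0 : 0 <= 1 / mm by apply: divr_ge0; lra.
  have e : `|g M i| / (2 * mm) = `|g M i| * (1 / mm) / 2.
    by field; rewrite gt_eqF.
  rewrite e. nra.
split.
- rewrite msS. apply: (@le_trans _ _ (`|ms k0| + `|b k0|)%:~R).
    by rewrite ler_int ler_normD.
  change (Sq f s0 k0.+1) with (S + `|M|%:~R + `|b k0|%:~R).
  rewrite intrD. have : 0 <= `|M|%:~R :> RR by rewrite ler0z normr_ge0.
  move: I1; rewrite -/S. lra.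
- have := nearz_add I2 (nearz_add P3 (nearz_small gM)).
  move=> /nearz_ext H; apply: nearz_le (H _ _) _.
    by move=> i /=; rewrite msS intrD; ring.
  rewrite -[(d.+1)%:R]natr1. lra.
- have msn : `|(ms k0)%:~R| = `|ms k0|%:~R :> RR by rewrite intr_norm.
  have msS' : `|ms k0|%:~R <= S by [].
  have e2 : 2 * (ms k0)%:~R = (2 * ms k0)%:~R :> RR by rewrite intrM.
  have H1 := nearz_mulr e2 P3.
  have H2 : nearz (fun i => (ms k0)%:~R * g M i / M%:~R) rho.
    apply: nearz_small => i. rewrite normrM normfV normrM msn -intr_norm.
    apply: le_trans (N4 _ nms msS'). rewrite ler_pM2r ?invr_gt0 //.
    rewrite ler_piMr //. 
  have := nearz_add I3 (nearz_add H1 H2).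
  move=> /nearz_ext H; apply: nearz_le (H _ _) _.
    have M0 : M%:~R != 0 :> RR.
      by apply/eqP => e0; move: m0; rewrite intr_norm e0 normr0 ltxx.
    move=> i /=; rewrite sqS msS intrD. field. exact: M0.
  have := N3 _ nms msS'. rewrite normrM (@gtr0_norm _ 2) ?two_gt0 // msn.
  rewrite -[(d.+1)%:R]natr1. lra.
Qed.

Theorem quad n (al : 'I_n -> RR) : kron al -> forall (u t : 'I_n -> RR) (r : RR), 0 < r ->
  exists m : int, nearz (fun i => m%:~R * al i - u i) r /\
                  nearz (fun i => m%:~R ^+ 2 * al i - t i) r.
Proof.
move=> Kr u t r r0.
have r20 : 0 < r / 2 by lra.
have [L HL] := small_inv r20.
pose K := (L.+1 ^ n)%N.
have K0 : 0 <= K%:R :> RR by [].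
pose rho := r / (4 * (K%:R + 2)).
have rho0 : 0 < rho by apply: divr_gt0 => //; lra.
have rhoE : rho * (4 * (K%:R + 2)) = r by rewrite /rho; field; lra.
have [a Ha] := Kr u _ r20.
pose g (M : int) i := frc (t i - a%:~R ^+ 2 * al i - M%:~R ^+ 2 * al i).
have Hg : forall M i, `|g M i| <= 1.
  by move=> M i; rewrite ger0_norm ?frc_ge0 // ltW // frc_lt1.
have hs : forall S, exists Mb, 1 <= S -> stepP al g rho S Mb.
  by move=> S; apply: step.
have [f Hf] := boolp.choice hs.
pose s0 : RR := `|a|%:~R + 1.
pose bq j := (f (Sq f s0 j)).2.
pose P k i := \sum_(0 <= j < k) (bq j)%:~R ^+ 2 * al i.
have [k1 [k2 [/andP [k12 k2K] HP]]] := pigeon L P.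
have Inv := invariant a k1 rho0 Hf Hg.
have [d' k2E] : exists d', k2 = (k1 + d'.+1)%N by exists (k2 - k1).-1; lia.
have [J1 J2 J3] := Inv d'.
have [I1 I2 I3] := Inv d'.+1.
rewrite -k2E in I1 I2 I3.
set j := (k1 + d')%N in J1 J2 J3.
set S := Sq f s0 j in J1.
have S1 : 1 <= S by apply: le_trans (Sq_ge _ _ _); rewrite /s0 lerDr ler0z normr_ge0.
have [P1 P2 P3] := Hf S S1.
set M := (f S).1 in P1 P2 P3.
have [[m0 SR N2 N3] [N4 N5 N6]] := num_facts rho0 S1 P1.
set msj := a + \sum_(k1 <= i < j) bq i in J1 J2 J3.
set msk := a + \sum_(k1 <= i < k2) bq i in I1 I2 I3.
have bqj : bq j = (f S).2 by [].
rewrite -bqj in P3.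
have mskE : msk = msj + bq j by rewrite /msk k2E addnS big_nat_recr ?leq_addr //= addrA.
have dK : (d'.+1)%:R <= K%:R :> RR by rewrite ler_nat; apply: leq_trans k2K; rewrite k2E leq_addl.
exists (msk + M); split.
- have := nearz_add I2 (nearz_add Ha P2).
  move=> /nearz_ext H; apply: nearz_le (H _ _) _.
    by move=> i /=; rewrite intrD; ring.
  have h := ler_wpM2l (ltW rho0) dK. lra.
- have sumE : forall i, P k2 i - P k1 i =
      \sum_(k1 <= j < k2) (f (Sq f (`|a|%:~R + 1) j)).2%:~R ^+ 2 * al i.
    move=> i; rewrite /P (@big_cat_nat _ _ _ k1 0 k2) //=; last exact: ltnW.
    rewrite addrAC subrr add0r. by [].
  have e1 : 2 * msj%:~R = (2 * msj)%:~R :> RR by rewrite intrM.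
  have H1 := nearz_mulr e1 P2.
  have e2 : 2 * M%:~R = (2 * M)%:~R :> RR by rewrite intrM.
  have H2 := nearz_mulr e2 P3.
  have H3 : nearz (fun i => g M i - (t i - a%:~R ^+ 2 * al i - M%:~R ^+ 2 * al i)) 0.
    apply: (nearz0 (N := fun i => - Num.floor (t i - a%:~R ^+ 2 * al i - M%:~R ^+ 2 * al i))).
    by move=> i; rewrite /g /frc intrN; ring.
  have := nearz_add I3 (nearz_add HP (nearz_add H1 (nearz_add H2 H3))).
  have M0 : M%:~R != 0 :> RR.
    by apply/eqP => e0; move: m0; rewrite intr_norm e0 normr0 ltxx.
  move=> /nearz_ext H; apply: nearz_le (H _ _) _.
    move=> i /=; rewrite sumE mskE !intrD. field. exact: M0.
  have msn : `|2 * msj%:~R| = 2 * `|msj|%:~R :> RR.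
    by rewrite normrM (@gtr0_norm _ 2) ?two_gt0 // intr_norm.
  have Mn : `|2 * M%:~R| = 2 * `|M|%:~R :> RR.
    by rewrite normrM (@gtr0_norm _ 2) ?two_gt0 // intr_norm.
  rewrite msn Mn.
  have mj0 : 0 <= `|msj|%:~R :> RR by rewrite ler0z normr_ge0.
  have h6 := N6 _ mj0 J1.
  have h7 : 2 * `|M|%:~R * (rho / (2 * (S + `|M|%:~R))) <= rho.
    have mm0 : 0 <= `|M|%:~R :> RR by rewrite ler0z normr_ge0.
    have q1 : rho / (2 * (S + `|M|%:~R)) * (2 * (S + `|M|%:~R)) = rho.
      by field; lra.
    have q0 : 0 <= rho / (2 * (S + `|M|%:~R)) by apply: divr_ge0; lra.
    nra.
  have h := ler_wpM2l (ltW rho0) dK. apply: le_trans (lerD (lexx _) (lerD HL (lerD h6 (lerD h7 (lexx 0))))) _.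
  move: h rhoE rho0. clear. clearbody rho K. lra.
Qed.

Lemma entry_le_norm n (x : 'rV[RR]_n) i : `|x ord0 i| <= `|x|.
Proof.
rewrite [leRHS]/Num.Def.normr /= mx_normrE; apply/bigmax_geP; right => /=.
by exists (ord0, i).
Qed.
Lemma ball_entry n (p y : 'rV[RR]_n) e : ball p e y -> forall i, `|p ord0 i - y ord0 i| < e.
Proof. rewrite mx_norm_ball /ball_ => H i.
apply: le_lt_trans H. have := entry_le_norm (p - y) i. by rewrite !mxE. Qed.
Lemma entry_ball n (p y : 'rV[RR]_n) e : 0 < e -> (forall i, `|p ord0 i - y ord0 i| < e) -> ball p e y.
Proof. move=> e0 H. rewrite mx_norm_ball /ball_ /Num.Def.normr /= mx_normrE.
apply/bigmax_ltP; split => // -[a b] _ /=. rewrite !mxE. by rewrite (ord1 a). Qed.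

Lemma lat_add n (u v : 'rV[RR]_n) : lattice_vec u -> lattice_vec v -> lattice_vec (u + v).
Proof. move=> hu hv i; rewrite mxE; exact: rpredD. Qed.
Lemma lat_opp n (u : 'rV[RR]_n) : lattice_vec u -> lattice_vec (- u).
Proof. move=> hu i; rewrite mxE rpredN; exact: hu. Qed.
Lemma lat_ext n (u v : 'rV[RR]_n) : u = v -> lattice_vec u -> lattice_vec v.
Proof. by move=> ->. Qed.

Lemma tau_lin n (tau : int -> 'rV[RR]_n) : torus_hom tau ->
  forall k : int, lattice_vec (tau k - k%:~R *: tau 1).
Proof.
move=> H.
have t0 : lattice_vec (tau 0).
  have := lat_opp (H 0 0); apply: lat_ext; rewrite addr0; by rewrite opprB addrK.
have pos : forall m : nat, lattice_vec (tau m%:Z - m%:~R *: tau 1).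
  elim=> [|m IH]; first by rewrite scale0r subr0.
  have := lat_add (H m 1) IH; apply: lat_ext.
  have -> : (m.+1)%:Z = m%:Z + 1 by rewrite -addn1 PoszD.
  apply/matrixP => a b; rewrite !mxE intrD; ring.
move=> [m|m]; first exact: pos.
have := lat_add (lat_add (lat_opp (H (Negz m) (m.+1%:Z))) t0) (lat_opp (pos m.+1)).
apply: lat_ext. rewrite NegzE addNr. apply/matrixP => a b; rewrite !mxE rmorphN /=; ring.
Qed.

Lemma lat_floor n (v : 'rV[RR]_n) i : lattice_vec v -> (Num.floor (v ord0 i))%:~R = v ord0 i.
Proof. move=> h; exact: floorK (h i). Qed.

Lemma kron_of n (tau : int -> 'rV[RR]_n) : torus_hom tau -> torus_dense_image tau ->
  kron (fun i => tau 1 ord0 i).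
Proof.
move=> H D p r r0.
have : closure [set tau k + w | k in [set: int] & w in lattice_vec (n:=n)] (\row_i p i).
  by rewrite D.
move=> /(_ _ (nbhsx_ballx (\row_i p i) r r0)) [x [[k _ [w wl <-]] hb]].
exists k.
have hl := tau_lin H k.
exists (fun i => - (Num.floor (w ord0 i) + Num.floor ((tau k - k%:~R *: tau 1) ord0 i))) => i.
rewrite intrN intrD !lat_floor //.
have := ball_entry hb i; rewrite !mxE => h.
rewrite distrC. apply: ltW. apply: le_lt_trans h. rewrite le_eqVlt; apply/orP; left.
by apply/eqP; congr `|_|; ring.
Qed.

Lemma half_lt (e : RR) : 0 < e -> e / 2 < e. Proof. move=> h; lra. Qed.

Lemma B_of_near n (tau : int -> 'rV[RR]_n) (U : set 'rV[RR]_n) : torus_hom tau ->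
  torus_open U -> U 0 ->
  exists2 r0 : RR, 0 < r0 & forall k : int, nearz (fun i => k%:~R * tau 1 ord0 i) r0 -> U (tau k).
Proof.
move=> H [inv oU] U0.
have : nbhs (0 : 'rV[RR]_n) U by move: oU; rewrite openE => /(_ _ U0).
move=> /nbhs_ballP [e e0 he].
exists (e / 2); first by apply: divr_gt0.
move=> k [N HN].
pose v : 'rV[RR]_n := \row_i (k%:~R * tau 1 ord0 i - (N i)%:~R).
have Uv : U v.
  apply: he; apply: entry_ball => // i; rewrite !mxE sub0r normrN.
  apply: le_lt_trans (HN i) _. exact: half_lt.
apply: inv Uv => i.
have := tau_lin H k i.
rewrite !mxE => hl.
have -> : k%:~R * tau 1 ord0 i - (N i)%:~R - tau k ord0 i
  = - (tau k ord0 i - k%:~R * tau 1 ord0 i) - (N i)%:~R by ring.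
by rewrite rpredB ?rpredN // intr_int.
Qed.

Lemma le_sum_norm n (al : 'I_n -> RR) i : `|al i| <= \sum_j `|al j|.
Proof.
rewrite (bigD1 i) //= lerDl. by apply: sumr_ge0.
Qed.

Lemma pick_c n (al : 'I_n -> RR) (r0 : RR) : 0 < r0 ->
  exists c : nat, (1 <= c)%N /\ forall i, `|al i| <= c%:R * (r0 / 2).
Proof.
move=> r0p; have [N HN] := nat_gt ((\sum_j `|al j|) / (r0 / 2)).
exists N.+1; split => // i.
have h2 : 0 < r0 / 2 by lra.
apply: le_trans (le_sum_norm al i) _.
rewrite -ler_pdivrMr //. apply: le_trans (ltW HN) _. by rewrite ler_nat.
Qed.

Theorem corollary1p2 (B : set int) :
  bohr_zero_nonperiodic B ->
  forall d : int, exists x y z : int,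
    B x /\ B y /\ B z /\ d = x * y - z ^+ 2.
Proof.
move=> [n [tau [U [n1 [Hh [Hd [Uo [U0 ->]]]]]]]] d.
have Kr := kron_of Hh Hd.
set al := fun i => tau 1 ord0 i in Kr.
have [r0 r00 HB] := B_of_near Hh Uo U0.
have [c [c1 Hc]] := pick_c al r00.
set cR : RR := c%:R.
have cR1 : 1 <= cR by rewrite /cR ler1n.
pose u i := - al i / cR.
pose t i := al i / cR ^+ 2 - d%:~R * al i.
pose eps := r0 / (cR ^+ 2 + 2 * cR + 2).
have eps0 : 0 < eps by apply: divr_gt0 => //; nra.
have epsE : eps * (cR ^+ 2 + 2 * cR + 2) = r0 by rewrite /eps; field; nra.
have [a [Ha1 Ha2]] := quad Kr u t eps0.
pose y := a ^+ 2 + d.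
pose z := a + y * c%:Z.
pose x := 1 + 2 * a * c%:Z + y * c%:Z ^+ 2.
have cE : (c%:Z)%:~R = cR by [].
have cR0 : cR != 0 by rewrite gt_eqF //; lra.
have yE : y%:~R = a%:~R ^+ 2 + d%:~R :> RR by rewrite /y !(intrD, intrM) -?expr2.
have zE : z%:~R = a%:~R + (a%:~R ^+ 2 + d%:~R) * cR :> RR.
  by rewrite /z /y !(intrD, intrM) -?expr2 cE.
have xE : x%:~R = 1 + 2 * a%:~R * cR + (a%:~R ^+ 2 + d%:~R) * cR ^+ 2 :> RR.
  by rewrite /x /y !(intrD, intrM) -?expr2 cE.
exists x, y, z; split; [|split; [|split]].
- apply: HB. rewrite -/al.
  have e1 : 2 * cR = (2 * c%:Z)%:~R by rewrite intrM.
  have e2 : cR ^+ 2 = (c%:Z ^+ 2)%:~R by rewrite rmorphXn.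
  have := nearz_add (nearz_mulr e1 Ha1) (nearz_mulr e2 Ha2).
  move=> /nearz_ext H; apply: nearz_le (H _ _) _.
    move=> i /=. rewrite xE /u /t /al. field. exact: cR0.
  rewrite !ger0_norm; [|nra|nra]. nra.
- apply: HB. rewrite -/al.
  have bnd : forall i, `|al i / cR ^+ 2| <= r0 / 2.
    move=> i; have c2 : 0 < cR ^+ 2 by rewrite exprn_gt0 //; lra.
    rewrite normrM normfV (ger0_norm (ltW c2)) ler_pdivrMr //.
    have h1 : cR <= cR ^+ 2 by rewrite expr2; nra.
    have h0 : 0 <= r0 / 2 by lra.
    have h2 := ler_wpM2r h0 h1.
    have := Hc i. move: h2. clear. lra.
  have := nearz_add Ha2 (nearz_small bnd).
  move=> /nearz_ext H; apply: nearz_le (H _ _) _.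
    move=> i /=. rewrite yE /t /al. ring.
  nra.
- apply: HB. rewrite -/al.
  have e1 : cR = (c%:Z)%:~R by [].
  have := nearz_add Ha1 (nearz_mulr e1 Ha2).
  move=> /nearz_ext H; apply: nearz_le (H _ _) _.
    move=> i /=. rewrite zE /u /t /al. field. exact: cR0.
  rewrite ger0_norm; [nra|lra].
- rewrite /x /z /y; ring.
Qed.
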